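(* For every real $x$, the improper Riemann integral below (improper at $t=\pi/2$) converges and $$H_1(x):=1+\int_0^{\pi/2}\left(\frac{x\sec^2 t\, e^{-x\tan t}}{\left(1+e^{-x\tan t}\right)^2}-\frac12 e^{-x^2\tan t}x^2\sec^2 t\right)dt=\begin{cases}0,& x<0,\\ 1,& x\ge 0.\end{cases}$$ *)

(* Defs.v *)
From Stdlib Require Import Reals.
From Coquelicot Require Import Coquelicot.
Open Scope R_scope.

Definition sec2 (t : R) : R := / (cos t ^ 2).

Definition H1_integrand (x t : R) : R :=
  x * sec2 t * exp (- x * tan t) / (1 + exp (- x * tan t)) ^ 2
  - / 2 * exp (- x ^ 2 * tan t) * x ^ 2 * sec2 t.

Definition step (x : R) : R := if Rlt_dec x 0 then 0 else 1.

(* Main.v *)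
Require Import Defs.
From Stdlib Require Import Reals Lra.
From Coquelicot Require Import Coquelicot.
Open Scope R_scope.

Definition A (x t : R) := / (1 + exp (- x * tan t)) + / 2 * exp (- x ^ 2 * tan t).

Lemma A_der x t : cos t <> 0 -> is_derive (A x) t (H1_integrand x t).
Proof.
intro hc. unfold A, H1_integrand, sec2, tan.
assert (h1 : 1 + exp (- x * (sin t / cos t)) <> 0) by (generalize (exp_pos (- x * (sin t / cos t))); lra).
auto_derive.
- repeat split; auto.
- replace (1 * cos t * / cos t + sin t * (- (1 * - sin t) * / (cos t * cos t))) with (/ cos t ^ 2).
  2:{ assert (hs := sin2_cos2 t). unfold Rsqr in hs. field_simplify; auto.
      rewrite <- hs. field. auto. }
  replace (- (x * (x * 1))) with (- x ^ 2) by ring.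
  unfold Rdiv in *. set (E1 := exp (- x * (sin t * / cos t))) in *.
  set (E2 := exp (- x ^ 2 * (sin t * / cos t))). field. auto.
Qed.

Lemma f_cont x t : cos t <> 0 -> continuous (H1_integrand x) t.
Proof.
intro hc. apply (@ex_derive_continuous R_AbsRing R_NormedModule). unfold H1_integrand, sec2, tan.
assert (h1 : 1 + exp (- x * (sin t / cos t)) <> 0) by (generalize (exp_pos (- x * (sin t / cos t))); lra).
auto_derive. repeat split; auto.
Qed.

Lemma lin_m c : c < 0 -> filterlim (fun u => c * u) (Rbar_locally' p_infty) (Rbar_locally m_infty).
Proof.
intros hc P [M HM]. exists (M / c). intros u hu. apply HM.
assert (c * (M / c) = M) by (field; lra). nra.
Qed.
Lemma lin_p c : 0 < c -> filterlim (fun u => c * u) (Rbar_locally' p_infty) (Rbar_locally p_infty).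
Proof.
intros hc P [M HM]. exists (M / c). intros u hu. apply HM.
assert (c * (M / c) = M) by (field; lra). nra.
Qed.
Lemma exp_m c : c < 0 -> is_lim (fun u => exp (c * u)) p_infty 0.
Proof. intro hc. eapply filterlim_comp. apply lin_m; auto. exact is_lim_exp_m. Qed.
Lemma exp_p c : 0 < c -> is_lim (fun u => exp (c * u)) p_infty p_infty.
Proof. intro hc. eapply filterlim_comp. apply lin_p; auto. exact is_lim_exp_p. Qed.
Lemma exp_zero c : c = 0 -> is_lim (fun u => exp (c * u)) p_infty 1.
Proof. intro hc. subst. apply is_lim_ext with (fun _ => 1). intro y. rewrite Rmult_0_l, exp_0; auto.
apply is_lim_const. Qed.

Definition g (x u : R) := / (1 + exp (- x * u)) + / 2 * exp (- x ^ 2 * u) - 1.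

Lemma comb x (a b : R) : is_lim (fun u => exp (- x * u)) p_infty a -> is_lim (fun u => exp (- x ^ 2 * u)) p_infty b ->
  is_lim (g x) p_infty (/ (1 + a) + / 2 * b - 1).
Proof.
intros ha hb.
assert (pa : 0 <= a). { apply (is_lim_le_loc (fun _ => 0) (fun u => exp (- x * u)) p_infty 0 a).
  exists 0. intros; apply Rlt_le, exp_pos. apply is_lim_const. auto. }
apply is_lim_minus'. 2: apply is_lim_const.
apply is_lim_plus'.
- assert (h1 : is_lim (fun u => 1 + exp (- x * u)) p_infty (1 + a)).
  { apply is_lim_plus'; auto. apply is_lim_const. }
  assert (H := is_lim_inv _ _ _ h1). simpl in H. apply H. intro e; injection e; lra.
- assert (H := is_lim_scal_l _ (/2) _ _ hb). exact H.
Qed.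

Lemma comb_neg x : x < 0 -> is_lim (g x) p_infty (-1).
Proof.
intro hx.
replace (-1) with (0 + / 2 * 0 - 1) by field.
apply is_lim_minus'. 2: apply is_lim_const.
apply is_lim_plus'.
- assert (h1 : is_lim (fun u => 1 + exp (- x * u)) p_infty p_infty).
  { eapply is_lim_plus. apply is_lim_const. apply exp_p; lra. unfold is_Rbar_plus; simpl; reflexivity. }
  assert (H := is_lim_inv _ _ _ h1). simpl in H. apply H. discriminate.
- assert (H := is_lim_scal_l _ (/2) _ _ (exp_m (- x ^ 2) ltac:(nra))). exact H.
Qed.

Lemma g_lim x : is_lim (g x) p_infty (step x - 1).
Proof.
unfold step. destruct (Rlt_dec x 0) as [h|h].
- replace (0 - 1) with (-1) by ring. apply comb_neg; auto.
- destruct (Req_dec x 0) as [e|e].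
  + replace (1 - 1) with (/ (1 + 1) + / 2 * 1 - 1) by field. apply comb; apply exp_zero; subst; ring.
  + replace (1 - 1) with (/ (1 + 0) + / 2 * 0 - 1) by field. apply comb; apply exp_m.
    lra. assert (0 < x ^ 2) by (apply pow_lt; lra). lra.
Qed.

Lemma tan_lim : filterlim tan (at_left (PI / 2)) (Rbar_locally p_infty).
Proof.
intros P [M HM].
assert (hb := atan_bound M).
assert (he : 0 < PI / 2 - atan M) by lra.
exists (mkposreal _ he). intros y hy hlt. apply HM.
rewrite <- (tan_atan M) at 1. apply tan_increasing; try lra.
simpl in hy. unfold ball in hy. simpl in hy. unfold AbsRing_ball, abs, minus, plus, opp in hy. simpl in hy.
apply Rabs_def2 in hy. lra.
Qed.

Theorem mainTheorem6 (x : R) :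
  exists I : R,
    is_RInt_gen (H1_integrand x) (at_point 0) (at_left (PI / 2)) I /\
    1 + I = step x.
Proof.
exists (step x - 1). split; [|ring].
intros P HP.
assert (hlim : filterlim (fun t => g x (tan t)) (at_left (PI / 2)) (locally (step x - 1))).
{ eapply filterlim_comp. apply tan_lim. exact (g_lim x). }
assert (hP := hlim P HP).
assert (hPI := PI_RGT_0).
assert (hpos : at_left (PI / 2) (fun b => 0 < b)).
{ assert (he : 0 < PI / 2) by lra. exists (mkposreal _ he). intros y hy _.
  simpl in hy. unfold ball in hy. simpl in hy. unfold AbsRing_ball, abs, minus, plus, opp in hy. simpl in hy.
  apply Rabs_def2 in hy. lra. }
assert (hlt : at_left (PI / 2) (fun b => b < PI / 2)).
{ exists (mkposreal _ Rlt_0_1). intros y _ h; exact h. }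
assert (hR := filter_and _ _ hpos (filter_and _ _ hlt hP)).
eapply Filter_prod with (Q := fun a : R => a = 0); [reflexivity | exact hR | ].
intros a b ha [hb1 [hb2 hb3]]. subst a. simpl.
exists (g x (tan b)). split; auto.
replace (g x (tan b)) with (minus (A x b) (A x 0)).
2:{ unfold minus, plus, opp, A, g. simpl. rewrite tan_0, !Rmult_0_r, exp_0. field; generalize (exp_pos (- x * tan b)); lra. }
apply (is_RInt_derive (V := R_CompleteNormedModule) (A x)).
- intros z hz. rewrite Rmin_left, Rmax_right in hz by lra. apply A_der.
  apply Rgt_not_eq, cos_gt_0; lra.
- intros z hz. rewrite Rmin_left, Rmax_right in hz by lra. apply f_cont.
  apply Rgt_not_eq, cos_gt_0; lra.
Qed.
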